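(* Let $n\geq 3$ be an integer and $p$ a prime with $\gcd(n,p(p-1))=1$. Then: (i) for every integer $r\geq\lfloor n/2\rfloor+1$ and all nonzero integers $a_1,\ldots,a_r$, the form $F=a_1x_1^n+\cdots+a_rx_r^n$ satisfies that $R(F)$ is dense in $\mathbb{Q}_p$; (ii) there exist nonzero integers $a_1,\ldots,a_s$ with $s=\lfloor n/2\rfloor$ such that for $F=a_1x_1^n+\cdots+a_sx_s^n$ the set $R(F)$ is not dense in $\mathbb{Q}_p$. Thus $\lfloor n/2\rfloor+1=\lceil (n+1)/2\rceil$ is the least $r$ such that every integral diagonal form of degree $n$ with all coefficients nonzero in at least $r$ variables has $R(F)$ dense in $\mathbb{Q}_p$.
   Context: For an integral form $F$ in $r$ variables, $R(F)=\{F(\overline{x})/F(\overline{y}):\overline{x},\overline{y}\in\mathbb{Z}^r,\ F(\overline{y})\neq 0\}$, viewed as a subset of the field $\mathbb{Q}_p$ of $p$-adic numbers with its $p$-adic topology. *)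

(* Defs.v *)
From HB Require Import structures.
From mathcomp Require Import all_boot all_order all_algebra.
Set Implicit Arguments. Unset Strict Implicit. Unset Printing Implicit Defensive.
Import Order.TTheory GRing.Theory Num.Theory.
Local Open Scope ring_scope.

Definition vp (p : nat) (q : rat) : int :=
  (logn p `|numq q|%N)%:Z - (logn p `|denq q|%N)%:Z.

Definition padic_abs (p : nat) (q : rat) : rat :=
  if q == 0 then 0 else (p%:R : rat) ^ (- vp p q).

(* A set S of rationals is dense in Q_p.  Since Q is dense in Q_p,
   this holds iff every rational is a p-adic limit of elements of S. *)
Definition dense_in_Qp (p : nat) (S : rat -> Prop) : Prop :=
  forall (x eps : rat), 0 < eps -> exists2 s, S s & padic_abs p (s - x) < eps.

Definition diag_form (r n : nat) (a : 'I_r -> int) (x : 'I_r -> int) : int :=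
  \sum_(i < r) a i * x i ^+ n.

Definition RF (r n : nat) (a : 'I_r -> int) : rat -> Prop :=
  fun q => exists x y : 'I_r -> int,
    diag_form n a y != 0 /\ q = (diag_form n a x)%:~R / (diag_form n a y)%:~R.

(* Main.v *)
Require Import Defs.
From mathcomp Require Import all_boot all_order all_algebra all_fingroup all_solvable.
From mathcomp Require Import ring lra zify.
Import Order.TTheory GRing.Theory Num.Theory.
Set Implicit Arguments. Unset Strict Implicit.
Local Open Scope ring_scope.

Lemma powsurj_nat (m n : nat) : (1 < m)%N -> coprime (totient m) n ->
  forall u w, coprime m u -> coprime m w -> exists z : nat, (z ^ n * w = u %[mod m])%N.
Proof.
move=> m1 cn u w cu cw.
have Uu : (u%:R : 'Z_m)%R \is a GRing.unit by rewrite unitZpE.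
have Uw : (w%:R : 'Z_m)%R \is a GRing.unit by rewrite unitZpE.
pose U := FinRing.unit 'Z_m Uu.
pose W := FinRing.unit 'Z_m Uw.
pose G := units_Zp m.
pose k := expg_invn G n.
pose y := ((U * W^-1) ^+ k)%g.
have cG : coprime #|G| n by rewrite card_units_Zp // ltnW.
have hy : (y ^+ n = U * W^-1)%g.
  by rewrite /y expgAC expgK // inE.
exists (nat_of_ord (FinRing.uval y)).
suff E : (((FinRing.uval y) ^ n * w)%:R : 'Z_m)%R = u%:R%R by rewrite -!(val_Zp_nat m1) E.
rewrite natrM natrX natr_Zp -FinRing.val_unitX hy.
have -> : (w%:R : 'Z_m)%R = FinRing.uval W by [].
by rewrite -FinRing.val_unitM -mulgA mulVg mulg1.
Qed.

Lemma PoszX (a b : nat) : (a ^ b)%N%:Z = (a%:Z) ^+ b.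
Proof. by rewrite -!natz natrX. Qed.

Lemma negsub (a b : int) : - a + b = - (a - b).
Proof. by rewrite opprB addrC. Qed.

Lemma exprN_odd (n : nat) (x : int) : odd n -> (- x) ^+ n = - x ^+ n.
Proof. by move=> on; rewrite -mulN1r exprMn -signr_odd on expr1 mulN1r. Qed.

Lemma powsurj_int (p n K : nat) (U W : int) : prime p -> odd n ->
  coprime n (p * (p - 1)) -> ~~ (p %| `|U|)%N -> ~~ (p %| `|W|)%N ->
  exists z : int, ((p ^ K)%:Z %| z ^+ n * W - U)%Z.
Proof.
move=> pp on cn pU pW.
case: K => [|K]; first by exists 0; rewrite expn0 dvd1z.
have m1 : (1 < p ^ K.+1)%N by rewrite -{1}(expn0 p) ltn_exp2l ?prime_gt1.
have ct : coprime (totient (p ^ K.+1)) n.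
  rewrite totient_pfactor // coprime_sym coprimeMr -subn1 /=.
  rewrite coprimeMr in cn; case/andP: cn => c1 c2; rewrite c2 /=.
  by rewrite coprimeXr // coprime_sym.
have cu : coprime (p ^ K.+1) `|U| by rewrite coprime_pexpl // prime_coprime.
have cw : coprime (p ^ K.+1) `|W| by rewrite coprime_pexpl // prime_coprime.
have [z0 hz] := @powsurj_nat _ _ m1 ct _ _ cu cw.
have D : ((p ^ K.+1)%:Z %| (z0%:Z) ^+ n * `|W|%:Z - `|U|%:Z)%Z.
  by rewrite -eqz_mod_dvd -PoszX -PoszM !modz_nat hz.
have [hU|hU] := lerP 0 U; have [hW|hW] := lerP 0 W.
- exists z0%:Z; by rewrite -(gez0_abs hU) -(gez0_abs hW).
- exists (- z0%:Z); rewrite exprN_odd // -(gez0_abs hU).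
  by rewrite -[W]opprK -(ltz0_abs hW) mulrN mulNr opprK.
- exists (- z0%:Z); rewrite exprN_odd // -[U]opprK -(ltz0_abs hU) -(gez0_abs hW).
  by rewrite mulNr opprK negsub rpredN.
- exists z0%:Z; rewrite -[U]opprK -(ltz0_abs hU) -[W]opprK -(ltz0_abs hW).
  by rewrite mulrN opprK negsub rpredN.
Qed.

Section Val.
Variable p : nat.
Hypothesis pp : prime p.

Lemma vdecomp (A : int) : A != 0 ->
  exists A' : int, A = (p ^ logn p `|A|)%N%:Z * A' /\ ~~ (p %| `|A'|)%N.
Proof.
move=> A0.
have A0' : (0 < `|A|)%N by rewrite absz_gt0.
have [m cm hm] := pfactor_coprime pp A0'.
pose s : int := (- 1) ^+ (A < 0)%R.
exists (s * m%:Z); split.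
  by rewrite {1}(intEsign A) {1}hm PoszM /s; ring.
by rewrite /s abszM abszX /= exp1n mul1n -prime_coprime.
Qed.

Lemma vexact (A A' : int) (m : nat) : A = (p ^ m)%N%:Z * A' -> ~~ (p %| `|A'|)%N ->
  logn p `|A| = m.
Proof.
move=> -> pA.
have A'0 : (0 < `|A'|)%N by rewrite lt0n; apply: contra pA => /eqP ->.
rewrite abszM /= lognM ?A'0 ?expn_gt0 ?prime_gt0 //.
have -> : logn p (p ^ m) = m by exact: pfactorK.
by rewrite logn_coprime ?addn0 // prime_coprime.
Qed.

Lemma vplus (A' B : int) (m : nat) : ~~ (p %| `|A'|)%N ->
  ((p ^ m.+1)%N%:Z %| B)%Z ->
  exists C', (p ^ m)%N%:Z * A' + B = (p ^ m)%N%:Z * C' /\ ~~ (p %| `|C'|)%N.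
Proof.
move=> pA /dvdzP [q ->].
exists (A' + q * p%:Z); split.
  by rewrite mulrDr expnS PoszM; ring.
apply: contra pA => h.
have : (p%:Z %| (A' + q * p%:Z) - q * p%:Z)%Z.
  by rewrite rpredB // dvdz_mull // dvdzz.
by rewrite addrK.
Qed.


Lemma vp_frac (A B : int) : A != 0 -> B != 0 ->
  vp p (A%:~R / B%:~R) = (logn p `|A|)%:Z - (logn p `|B|)%:Z.
Proof.
move=> A0 B0.
set q : rat := A%:~R / B%:~R.
have q0 : q != 0 by rewrite mulf_neq0 ?invr_eq0 ?intr_eq0.
have E : numq q * B = A * denq q.
  apply/eqP; rewrite -(@fracq_eq (numq q, denq q) (A, B)) ?denq_neq0 //.
  by rewrite !fracqE /= divq_num_den.
have E2 : (`|numq q| * `|B| = `|A| * `|denq q|)%N by rewrite -!abszM E.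
have n0 : (0 < `|numq q|)%N by rewrite absz_gt0 numq_eq0.
have d0 : (0 < `|denq q|)%N by rewrite absz_gt0 denq_neq0.
have A0' : (0 < `|A|)%N by rewrite absz_gt0.
have B0' : (0 < `|B|)%N by rewrite absz_gt0.
have E3 := congr1 (logn p) E2.
rewrite !lognM // in E3.
rewrite /vp; lia.
Qed.


Lemma pabs_le (A B : int) (N : nat) : A != 0 -> B != 0 ->
  (logn p `|B| + N <= logn p `|A|)%N ->
  padic_abs p (A%:~R / B%:~R) <= (p%:R : rat) ^ (- (N%:Z)).
Proof.
move=> A0 B0 h.
have q0 : (A%:~R / B%:~R : rat) != 0 by rewrite mulf_neq0 ?invr_eq0 ?intr_eq0.
rewrite /padic_abs (negbTE q0) vp_frac //.
apply: ler_weXz2l; first by rewrite ler1n prime_gt0.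
lia.
Qed.

Lemma pabs_ge (A B : int) (s : nat) : A != 0 -> B != 0 ->
  (logn p `|A| <= logn p `|B| + s)%N ->
  (p%:R : rat) ^ (- (s%:Z)) <= padic_abs p (A%:~R / B%:~R).
Proof.
move=> A0 B0 h.
have q0 : (A%:~R / B%:~R : rat) != 0 by rewrite mulf_neq0 ?invr_eq0 ?intr_eq0.
rewrite /padic_abs (negbTE q0) vp_frac //.
apply: ler_weXz2l; first by rewrite ler1n prime_gt0.
lia.
Qed.

Lemma chooseN (eps : rat) : 0 < eps -> exists N : nat, (p%:R : rat) ^ (- (N%:Z)) < eps.
Proof.
move=> he.
exists (Num.Def.archi_bound eps^-1).
set N := Num.Def.archi_bound eps^-1.
have hN : eps^-1 < N%:R by apply: archi_boundP; rewrite invr_ge0 ltW.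
have p1 : (1 < p)%N by apply: prime_gt1.
have hP : (N%:R : rat) <= (p%:R) ^+ N.
  by rewrite -natrX ler_nat ltnW // ltn_expl.
have Pp : (0 : rat) < p%:R ^+ N by rewrite exprn_gt0 // ltr0n ltnW.
rewrite -exprnN invf_plt ?posrE //.
exact: lt_le_trans hN hP.
Qed.

End Val.

Lemma z0n n : (0 < n)%N -> (0 : int) ^+ n = 0.
Proof. by case: n => // n _; rewrite exprS mul0r. Qed.

Lemma df_scale r n (a : 'I_r -> int) (c : int) x :
  diag_form n a (fun i => c * x i) = c ^+ n * diag_form n a x.
Proof.
rewrite /diag_form big_distrr; apply: eq_bigr => i _; by rewrite exprMn mulrCA.
Qed.

Lemma df_zero r n (a : 'I_r -> int) : (0 < n)%N -> diag_form n a (fun _ => 0) = 0.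
Proof. by move=> n0; rewrite /diag_form big1 // => i _; rewrite z0n // mulr0. Qed.

Lemma df_unit r n (a : 'I_r -> int) i t : (0 < n)%N ->
  diag_form n a (fun k => if k == i then t else 0) = a i * t ^+ n.
Proof.
move=> n0; rewrite /diag_form (bigD1 i) //= eqxx big1 ?addr0 // => j /negbTE ->.
by rewrite z0n // mulr0.
Qed.

Lemma df_two r n (a : 'I_r -> int) i j t1 t2 : i != j -> (0 < n)%N ->
  diag_form n a (fun k => if k == i then t1 else if k == j then t2 else 0)
  = a i * t1 ^+ n + a j * t2 ^+ n.
Proof.
move=> ij n0; rewrite /diag_form (bigD1 i) //= eqxx (bigD1 j) /=; last by rewrite eq_sym.
rewrite eq_sym (negbTE ij) eqxx big1 ?addr0 ?addrA // => k /andP [ki kj].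
by rewrite (negbTE ki) (negbTE kj) z0n // mulr0.
Qed.

Unset Implicit Arguments.
Lemma ineq1 (u1 u2 u3 u4 u5 : nat) : (u1 + u2 + u4 + u5 <= u2 + u3 + u1 + (u5 + u4))%N.
Proof. lia. Qed.

Lemma aux (b s n : nat) : (b %% n < s)%N -> (s + s < n)%N -> ~~ ((b %% n + s) %% n < s)%N.
Proof.
move: (b %% n)%N => x h1 h2; rewrite modn_small; first by rewrite -leqNgt leq_addl.
lia.
Qed.

Section Main.
Variables p n : nat.
Hypothesis pp : prime p.
Hypothesis on : odd n.
Hypothesis cn : coprime n (p * (p - 1)).

Lemma dense_of_res r (a : 'I_r -> int) (i0 : 'I_r) : a i0 != 0 ->
  (forall e : nat, exists X Y : 'I_r -> int, [/\ diag_form n a X != 0, diag_form n a Y != 0 &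
      (logn p `|diag_form n a X| = logn p `|diag_form n a Y| + e %[mod n])%N]) ->
  dense_in_Qp p (RF n a).
Proof.
move=> ai0 H x eps he.
have n0 : (0 < n)%N by case: n on.
have [N hN] := chooseN pp he.
have Y1 : diag_form n a (fun k => if k == i0 then 1 else 0) = a i0.
  by rewrite df_unit // expr1n mulr1.
case: (eqVneq x 0) => [->|x0].
  exists 0.
    exists (fun _ => 0), (fun k => if k == i0 then 1 else 0); split; first by rewrite Y1.
    by rewrite df_zero // mul0r.
  by rewrite subrr /padic_abs eqxx.
set c := numq x; set d := denq x.
have c0 : c != 0 by rewrite numq_eq0.
have d0 : d != 0 := denq_neq0 x.
have [c' [hc pc]] := vdecomp pp c0.
have [d' [hd pd]] := vdecomp pp d0.
set g := logn p `|c|; set dl := logn p `|d|.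
rewrite -/g in hc; rewrite -/dl in hd.
have [X0 [Y0 [A0 B0 hAB]]] := H (g + (n-1)*dl)%N.
set A := diag_form n a X0 in A0 hAB *; set B := diag_form n a Y0 in B0 hAB *.
have [A' [hA pA]] := vdecomp pp A0.
have [B' [hB pB]] := vdecomp pp B0.
set al := logn p `|A| in hA hAB *; set be := logn p `|B| in hB hAB *.
have hDE : ((al + dl) %% n = (be + g) %% n)%N.
  rewrite -modnDml hAB modnDml.
  have -> : (be + (g + (n-1)*dl) + dl = dl * n + (be + g))%N.
    rewrite mulnBl mul1n. have : (dl <= n * dl)%N by rewrite leq_pmull.
    clear; lia.
  by rewrite modnMDl.
have hL : (al + dl + n * ((be + g) %/ n) = be + g + n * ((al + dl) %/ n))%N.
  have e1 := divn_eq (al + dl) n; have e2 := divn_eq (be + g) n.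
  rewrite hDE in e1; clear -e1 e2; lia.
set i := ((be + g) %/ n)%N in hL; set j := ((al + dl) %/ n)%N in hL.
set K := (N + dl)%N.
have pU : ~~ (p %| `|(c' * B')%R|)%N by rewrite abszM Euclid_dvdM // negb_or pc pB.
have pW : ~~ (p %| `|(A' * d')%R|)%N by rewrite abszM Euclid_dvdM // negb_or pA pd.
have [z hz] := @powsurj_int p n K (c' * B') (A' * d') pp on cn pU pW.
pose X := fun k => ((p ^ i)%N%:Z * z) * X0 k.
pose Y := fun k => (p ^ j)%N%:Z * Y0 k.
have FX : diag_form n a X = ((p ^ i)%N%:Z * z) ^+ n * A by rewrite df_scale.
have FY : diag_form n a Y = ((p ^ j)%N%:Z) ^+ n * B by rewrite df_scale.
have pj0 : (p ^ j)%N%:Z != 0 by rewrite -lt0n expn_gt0 prime_gt0.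
have FY0 : diag_form n a Y != 0 by rewrite FY mulf_neq0 ?expf_neq0.
exists ((diag_form n a X)%:~R / (diag_form n a Y)%:~R).
  by exists X, Y.
have -> : x = c%:~R / d%:~R by rewrite /c /d divq_num_den.
have FYr : (diag_form n a Y)%:~R != 0 :> rat by rewrite intr_eq0.
have dr : d%:~R != 0 :> rat by rewrite intr_eq0.
have -> : (diag_form n a X)%:~R / (diag_form n a Y)%:~R - c%:~R / d%:~R
   = (diag_form n a X * d - c * diag_form n a Y)%:~R / (diag_form n a Y * d)%:~R :> rat.
  rewrite rmorphB !rmorphM /=; field; by rewrite FYr dr.
set Num := diag_form n a X * d - c * diag_form n a Y.
set Den := diag_form n a Y * d.
have Den0 : Den != 0 by rewrite mulf_neq0.
have E1 : Num = (p%:Z) ^+ (al + dl + i * n) * (z ^+ n * (A' * d'))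
               - (p%:Z) ^+ (be + g + j * n) * (c' * B').
  rewrite /Num FX FY hA hB hd hc !PoszX !exprD !exprM exprMn; ring.
have E2 : Num = (p ^ (be + g + n * j))%N%:Z * (z ^+ n * (A' * d') - c' * B').
  by rewrite E1 (mulnC i n) (mulnC j n) hL PoszX mulrBr.
case: (eqVneq Num 0) => [->|Num0].
  by rewrite mul0r /padic_abs eqxx.
have dvdNum : ((p ^ (be + g + n * j + K))%N%:Z %| Num)%Z.
  by rewrite E2 (expnD p (be + g + n * j) K) PoszM dvdz_mul // dvdzz.
have lNum : (be + g + n * j + K <= logn p `|Num|)%N.
  by rewrite -pfactor_dvdn // absz_gt0.
have pBd : ~~ (p %| `|(B' * d')%R|)%N by rewrite abszM Euclid_dvdM // negb_or pB pd.
have lDen : logn p `|Den| = (j * n + be + dl)%N.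
  apply: (vexact pp (A' := B' * d')) => //.
  rewrite /Den FY hB hd !PoszX !exprD !exprM; ring.
apply: le_lt_trans (pabs_le pp Num0 Den0 _) hN.
rewrite lDen; apply: leq_trans lNum; rewrite /K (mulnC j n).
exact: ineq1.
Qed.

Lemma Fu r (a : 'I_r -> int) i : (0 < n)%N ->
  diag_form n a (fun k => if k == i then 1 else 0) = a i.
Proof. by move=> n0; rewrite df_unit // expr1n mulr1. Qed.

Lemma res_i r (a : 'I_r -> int) : (n./2 + 1 <= r)%N -> (forall i, a i != 0) ->
  forall e : nat, exists X Y : 'I_r -> int, [/\ diag_form n a X != 0, diag_form n a Y != 0 &
      (logn p `|diag_form n a X| = logn p `|diag_form n a Y| + e %[mod n])%N].
Proof.
move=> hr a0 e.
have n0 : (0 < n)%N by case: n on.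
pose f := fun i => ((logn p `|a i|) %% n)%N.
case: (boolP (injectiveb f)) => [/injectiveP finj | /injectivePn [i [j ij fij]]].
  pose g := fun i => ((f i + e) %% n)%N.
  have ginj : injective g.
    move=> i j /eqP; rewrite /g eqn_modDr /f !modn_mod => /eqP h; apply: finj.
    by rewrite /f h.
  pose s1 := map f (ord_enum r); pose s2 := map g (ord_enum r).
  have so : size (ord_enum r) = r by rewrite -(size_map val) val_ord_enum size_iota.
  case: (boolP (has (fun x => x \in s1) s2)) => [|hn]; last first.
    have U : uniq (s1 ++ s2).
      rewrite cat_uniq !map_inj_uniq // ord_enum_uniq andbT /=.
      by apply: contra hn => /hasP [x h1 h2]; apply/hasP; exists x.
    have S : {subset s1 ++ s2 <= iota 0 n}.
      move=> x; rewrite mem_cat mem_iota add0n => /orP [] /mapP [i _ ->].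
        by rewrite /f ltn_mod n0.
      by rewrite /g ltn_mod n0.
    have := uniq_leq_size U S.
    rewrite size_cat !size_map so size_iota.
    have := odd_double_half n; rewrite on /= => hn2.
    lia.
  case/hasP => x /mapP [j _ ->] /mapP [i _ hij].
  exists (fun k => if k == i then 1 else 0), (fun k => if k == j then 1 else 0).
  rewrite !Fu //; split => //.
  by rewrite -/(f i) -hij /g /f modnDml.
set al := logn p `|a i|; set be := logn p `|a j|.
have [A' [hA pA]] := vdecomp pp (a0 i).
have [B' [hB pB]] := vdecomp pp (a0 j).
rewrite -/al in hA; rewrite -/be in hB.
have hL : (al + n * (be %/ n) = be + n * (al %/ n))%N.
  have e1 := divn_eq al n; have e2 := divn_eq be n.
  move: fij; rewrite /f -/al -/be => fij.
  rewrite fij in e1; clear -e1 e2; lia.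
set i0 := (be %/ n)%N in hL; set j0 := (al %/ n)%N in hL.
set k := (e + n)%N.
have k0 : (0 < k)%N by rewrite addn_gt0 n0 orbT.
have pU : ~~ (p %| `|(p ^ k)%N%:Z - B'|)%N.
  apply: contra pB => h.
  have h' : (p%:Z %| (p ^ k)%N%:Z - B')%Z := h.
  have hp : (p%:Z %| (p ^ k)%N%:Z)%Z by rewrite PoszX dvdz_exp ?dvdzz.
  change (p%:Z %| B')%Z.
  have -> : B' = (p ^ k)%N%:Z - ((p ^ k)%N%:Z - B') by rewrite opprB addrC subrK.
  exact: rpredB hp h'.
have [lam hlam] := @powsurj_int p n k.+1 ((p ^ k)%N%:Z - B') A' pp on cn pU pA.
have p1 : ~~ (p %| `|(1 : int)|)%N by rewrite /= dvdn1 neq_ltn prime_gt1 ?orbT.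
have [C' [hC pC]] := vplus (A' := 1) (m := k) p1 hlam.
pose X := fun k' => if k' == i then (p ^ i0)%N%:Z * lam else if k' == j then (p ^ j0)%N%:Z else 0.
exists X, (fun k' => if k' == j then 1 else 0).
have FX : diag_form n a X = (p ^ (al + n * i0 + k))%N%:Z * C'.
  rewrite df_two // hA hB.
  have -> : (p ^ al)%N%:Z * A' * ((p ^ i0)%N%:Z * lam) ^+ n + (p ^ be)%N%:Z * B' * (p ^ j0)%N%:Z ^+ n
      = (p%:Z) ^+ (al + i0 * n) * (lam ^+ n * A') + (p%:Z) ^+ (be + j0 * n) * B'.
    by rewrite !PoszX !exprD !exprM exprMn; ring.
  rewrite (mulnC i0 n) (mulnC j0 n) -hL expnD PoszM -mulrA -hC !PoszX; ring.
have C0 : C' != 0 by apply: contra pC => /eqP ->.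
have pk0 : (p ^ (al + n * i0 + k))%N%:Z != 0 by rewrite -lt0n expn_gt0 prime_gt0.
split.
- by rewrite FX mulf_neq0.
- by rewrite Fu.
rewrite Fu // (vexact pp FX pC) -/be hL.
have -> : (be + n * j0 + k = j0.+1 * n + (be + e))%N by rewrite /k; clear; lia.
by rewrite modnMDl.
Qed.

Definition a2 : 'I_(n./2) -> int := fun i => (p ^ i)%N%:Z.

Lemma val2 (X : 'I_(n./2) -> int) : diag_form n a2 X != 0 ->
  (logn p `|diag_form n a2 X| %% n < n./2)%N.
Proof.
move=> FX0.
have n0 : (0 < n)%N by case: n on.
have sn : (n./2 < n)%N by rewrite -{2}(odd_double_half n) on; lia.
have [i0 hi0] : exists i0, X i0 != 0.
  case: (pickP (fun i => X i != 0)) => [i0 h|h]; first by exists i0.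
  move: FX0; rewrite /diag_form big1 ?eqxx // => i _.
  by move: (h i) => /negbFE/eqP ->; rewrite z0n // mulr0.
pose w := fun i : 'I_(n./2) => (i + n * logn p `|X i|)%N.
case: (@arg_minnP _ i0 (fun i => X i != 0) w hi0) => im Xim wmin.
have [Xm' [hXm pXm]] := vdecomp pp Xim.
have pXn : ~~ (p %| `|Xm' ^+ n|)%N by rewrite abszX Euclid_dvdX // negb_and pXm.
have rest : ((p ^ (w im).+1)%N%:Z %| \sum_(i < n./2 | i != im) a2 i * X i ^+ n)%Z.
  apply: rpred_sum => i nim.
  case: (eqVneq (X i) 0) => [->|Xi0]; first by rewrite z0n // mulr0 rpred0.
  have [Xi' [hXi _]] := vdecomp pp Xi0.
  have wle := wmin i Xi0.
  have wne : w i != w im.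
    apply: contra nim => /eqP h; apply/eqP/val_inj => /=.
    have := congr1 (fun x => x %% n)%N h; rewrite /w /=.
    rewrite !(addnC (nat_of_ord _)) !(mulnC n) !modnMDl !modn_small //.
      by apply: ltn_trans sn.
    by apply: ltn_trans sn.
  have lt : ((w im).+1 <= w i)%N by rewrite ltn_neqAle eq_sym wne wle.
  rewrite hXi exprMn /a2 mulrA.
  have -> : (p ^ i)%N%:Z * (p ^ logn p `|X i|)%N%:Z ^+ n = (p ^ (w i))%N%:Z.
    by rewrite !PoszX -exprM -exprD /w (mulnC n).
  by apply: dvdz_mulr; rewrite dvdzE /= dvdn_exp2l.
have [C' [hC pC]] := vplus (A' := Xm' ^+ n) (m := w im) pXn rest.
have FXe : diag_form n a2 X = (p ^ (w im))%N%:Z * C'.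
  rewrite -hC /diag_form (bigD1 im) //=; congr (_ + _).
  rewrite /a2 hXm exprMn mulrA.
  by rewrite !PoszX -exprM -exprD /w (mulnC n).
rewrite (vexact pp FXe pC) /w (addnC (nat_of_ord _)) (mulnC n) modnMDl modn_small //. exact: ltn_trans sn.
Qed.

Lemma part2 : exists a : 'I_(n./2) -> int, (forall i, a i != 0) /\ ~ dense_in_Qp p (RF n a).
Proof.
have n0 : (0 < n)%N by case: n on.
have sn : (n./2 + n./2 < n)%N by rewrite -{3}(odd_double_half n) on; lia.
exists a2; split.
  by move=> i; rewrite /a2 -lt0n expn_gt0 prime_gt0.
move=> D.
set s := n./2 in sn *.
have pgt0 : (0 : rat) < p%:R by rewrite ltr0n prime_gt0.
have [s0 [X [Y [FY0 ->]]] hs] := D ((p%:R) ^+ s) ((p%:R) ^ (- (s%:Z))) (exprz_gt0 _ pgt0).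
set FX := diag_form n a2 X in hs *; set FY := diag_form n a2 Y in FY0 hs *.
have FYr : FY%:~R != 0 :> rat by rewrite intr_eq0.
have E : FX%:~R / FY%:~R - (p%:R) ^+ s = (FX - (p ^ s)%N%:Z * FY)%:~R / FY%:~R :> rat.
  rewrite rmorphB rmorphM /=.
  have -> : ((p ^ s)%N%:Z)%:~R = (p%:R : rat) ^+ s by rewrite -natrX.
  by field.
rewrite E in hs.
set Num := FX - (p ^ s)%N%:Z * FY.
have ps0 : (p ^ s)%N%:Z != 0 by rewrite -lt0n expn_gt0 prime_gt0.
have [Num0 lNum] : Num != 0 /\ (logn p `|Num| <= logn p `|FY| + s)%N.
  have vY := val2 Y FY0.
  have pw0 : forall k, (p ^ k)%N%:Z != 0 by move=> k; rewrite -lt0n expn_gt0 prime_gt0.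
  case: (eqVneq FX 0) => [FX0|FX0].
    have hN : Num = (p ^ s)%N%:Z * (- FY) by rewrite /Num FX0 sub0r mulrN.
    split; first by rewrite hN mulf_neq0 // oppr_eq0.
    have FYp : (0 < `|FY|)%N by rewrite absz_gt0.
    rewrite hN abszM abszN /= lognM ?FYp ?expn_gt0 ?prime_gt0 //.
    have -> : logn p (p ^ s) = s by exact: pfactorK.
    by rewrite addnC.
  have vX := val2 X FX0.
  have [A' [hA pA]] := vdecomp pp FX0.
  have [B' [hB pB]] := vdecomp pp FY0.
  set al := logn p `|FX| in hA vX *; set be := logn p `|FY| in hB vY *.
  have ne : al != (be + s)%N.
    apply/eqP => h; move: vX; rewrite h -modnDml; apply/negP.
    exact: aux.
  case: (ltngtP al (be + s)) => h; last by rewrite h eqxx in ne.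
  - have dv : ((p ^ al.+1)%N%:Z %| - ((p ^ s)%N%:Z * FY))%Z.
      rewrite rpredN hB mulrA -PoszM -expnD.
      by apply: dvdz_mulr; rewrite dvdzE /= dvdn_exp2l // addnC.
    have [C' [hC pC]] := vplus (A' := A') (m := al) pA dv.
    have hN : Num = (p ^ al)%N%:Z * C' by rewrite -hC /Num hA.
    have C0 : C' != 0 by apply: contra pC => /eqP ->.
    split; first by rewrite hN mulf_neq0.
    by rewrite (vexact pp hN pC) ltnW.
  - have dv : ((p ^ (be + s).+1)%N%:Z %| FX)%Z.
      by rewrite hA; apply: dvdz_mulr; rewrite dvdzE /= dvdn_exp2l.
    have pB' : ~~ (p %| `|- B'|)%N by rewrite abszN.
    have [C' [hC pC]] := vplus (A' := - B') (m := (be + s)%N) pB' dv.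
    have hN : Num = (p ^ (be + s))%N%:Z * C'.
      rewrite -hC /Num hB !PoszX exprD; ring.
    have C0 : C' != 0 by apply: contra pC => /eqP ->.
    split; first by rewrite hN mulf_neq0.
    by rewrite (vexact pp hN pC).
have := pabs_ge pp Num0 FY0 lNum.
by rewrite leNgt hs.
Qed.
End Main.

Theorem corollary1p4 (n p : nat) :
  (3 <= n)%N -> prime p -> coprime n (p * (p - 1)) ->
  (forall (r : nat), (n./2 + 1 <= r)%N ->
     forall a : 'I_r -> int, (forall i, a i != 0) -> dense_in_Qp p (RF n a))
  /\
  (exists a : 'I_(n./2) -> int, (forall i, a i != 0) /\ ~ dense_in_Qp p (RF n a)).
Proof.
move=> n3 pp cn.
have e2 : (2 %| p * (p - 1))%N.
  rewrite dvdn2 oddM; case: p pp {cn} => // p' _; rewrite subn1 /=.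
  by case: (odd p').
have on : odd n.
  apply/negPn/negP => ev.
  have : (2 %| gcdn n (p * (p - 1)))%N by rewrite dvdn_gcd e2 andbT dvdn2.
  by move/eqP: cn => ->.
split.
  move=> r hr a a0.
  have r0 : (0 < r)%N by rewrite (leq_trans _ hr) // addn1.
  apply: (@dense_of_res p n pp on cn r a (Ordinal r0) (a0 _)).
  exact: res_i.
exact: part2.
Qed.
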